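(* Let $\underline{X}=(X_n,p_n)$ be an inverse sequence of sets, $(T_{\underline{X}},v)$ its tree and $T_\infty\subset T_{\underline{X}}$ its maximal geodesically complete subtree. Then $\underline{X}$ is Mittag-Leffler if and only if there is a rooted metrically proper homotopy equivalence between $T_{\underline{X}}$ and $T_\infty$. Moreover, the homotopy can be chosen to be a deformation retraction of $T_{\underline{X}}$ onto $T_\infty$.
   Context: An inverse sequence of sets $(X_n,p_n)_{n\ge1}$ has maps $p_n:X_{n+1}\to X_n$; $p_{nm}=p_n\circ\cdots\circ p_{m-1}:X_m\to X_n$. It is Mittag-Leffler if for every $n_0$ there is $n_1>n_0$ such that $p_{n_0n}(X_n)=p_{n_0n_1}(X_{n_1})$ for all $n>n_1$. Its tree $T_{\underline{X}}$ is the geometric realization of the graph with vertices $\{v\}\sqcup\bigsqcup_nX_n$ and edges $\{x,p_n(x)\}$ ($x\in X_{n+1}$) and $\{x,v\}$ ($x\in X_1$), edges of length 1, path metric, rooted at $v$. The maximal geodesically complete subtree $T_\infty$ is the union of $\{v\}$ and the images of all isometric embeddings $F:[0,\infty)\to T_{\underline{X}}$ with $F(0)=v$, rooted at $v$. A map between rooted trees is rooted if it sends root to root, metrically proper if preimages of bounded sets are bounded. A rooted metrically proper homotopy between rooted continuous metrically proper maps $f,f':(T,v)\to(T',w)$ is a continuous $H:T\times[0,1]\to T'$ with $H(\cdot,0)=f$, $H(\cdot,1)=f'$, $H(v,s)=w$ for all $s$, and for every $M>0$ some $N>0$ with $H^{-1}(B(w,M))\subset B(v,N)\times[0,1]$ (open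 balls). A rooted metrically proper homotopy equivalence is a pair of rooted continuous metrically proper maps $f:T\to T'$, $g:T'\to T$ with $g\circ f$ and $f\circ g$ rooted metrically proper homotopic to the identities. A deformation retraction here means a rooted metrically proper homotopy $H$ from the identity of $T_{\underline{X}}$ to a retraction onto $T_\infty$ with $H(x,s)=x$ for all $x\in T_\infty$, $s\in[0,1]$. *)

(* Defs.v *)
From Stdlib Require Import Reals ClassicalEpsilon.
Open Scope R_scope.

Section InverseSequenceTree.

Context (X : nat -> Type) (p : forall n, X (S n) -> X n).

(* Vertices of the tree other than the root: elements of the X_n. *)
Definition vtx : Type := {n : nat & X n}.

Definition lvl (v : vtx) : nat := projT1 v.

(* parent vertex (for level 0 the parent is the root; we return v itself,
   this value is never used) *)
Definition par (v : vtx) : vtx :=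
  match v with
  | existT _ n x =>
      match n return X n -> vtx with
      | O => fun x => existT X O x
      | S m => fun x => existT X m (p m x)
      end x
  end.

(* ancestor of v at level k (for k <= lvl v): p_{k,lvl v}(v) *)
Definition anc (k : nat) (v : vtx) : vtx := Nat.iter (lvl v - k) par v.

(* Mittag-Leffler: for every n0 there is n1 > n0 with
   p_{n0 n}(X_n) = p_{n0 n1}(X_{n1}) for all n > n1. *)
Definition MittagLeffler : Prop :=
  forall n0 : nat, exists n1 : nat, (n0 < n1)%nat /\
    forall n : nat, (n1 < n)%nat ->
      forall w : vtx,
        (exists x : X n, anc n0 (existT X n x) = w) <->
        (exists x : X n1, anc n0 (existT X n1 x) = w).

(* The root v is [Root];
   [Pt x t] (x in X_n, 0 < t <= 1) is the point on the edge joining x to its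
   parent (p_{n-1}(x), or the root if n = 0) at distance 1 - t from x, i.e. at
   height n + t above the root.  The vertex x itself is [Pt x 1]. *)
Inductive pt : Type :=
  | Root : pt
  | Pt : vtx -> {t : R | 0 < t <= 1} -> pt.

Definition height (a : pt) : R :=
  match a with
  | Root => 0
  | Pt x t => INR (lvl x) + proj1_sig t
  end.

Fixpoint common_cnt (x y : vtx) (k0 : nat) : nat :=
  match k0 with
  | O => O
  | S k => (common_cnt x y k +
            (if excluded_middle_informative (anc k x = anc k y) then 1 else 0))%nat
  end.

(* height of the deepest common ancestor vertex of x and y (0 = root) *)
Definition meet_height (x y : vtx) : R :=
  INR (common_cnt x y (S (Nat.min (lvl x) (lvl y)))).

(* path metric of the tree (edges of length 1):
   d(a,b) = h(a) + h(b) - 2 h(a /\ b) *)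
Definition dist (a b : pt) : R :=
  match a, b with
  | Root, Root => 0
  | Root, _ => height b
  | _, Root => height a
  | Pt x _, Pt y _ =>
      height a + height b
      - 2 * Rmin (meet_height x y) (Rmin (height a) (height b))
  end.

Definition Tall : pt -> Prop := fun _ => True.

(* maximal geodesically complete subtree: root together with the images of
   all isometric embeddings F : [0,oo) -> T_X with F 0 = root *)
Definition Tinf : pt -> Prop := fun a =>
  a = Root \/
  exists F : R -> pt,
    F 0 = Root /\
    (forall s t, 0 <= s -> 0 <= t -> dist (F s) (F t) = Rabs (s - t)) /\
    exists s, 0 <= s /\ F s = a.

Definition cont_on (A : pt -> Prop) (f : pt -> pt) : Prop :=
  forall x, A x -> forall eps, 0 < eps -> exists delta, 0 < delta /\
    forall y, A y -> dist x y < delta -> dist (f x) (f y) < eps.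

Definition bounded (S : pt -> Prop) : Prop :=
  exists M, forall y z, S y -> S z -> dist y z <= M.

Definition metr_proper_on (A : pt -> Prop) (f : pt -> pt) : Prop :=
  forall S : pt -> Prop, bounded S -> bounded (fun x => A x /\ S (f x)).

Definition rooted_map (A B : pt -> Prop) (f : pt -> pt) : Prop :=
  (forall x, A x -> B (f x)) /\ f Root = Root /\
  cont_on A f /\ metr_proper_on A f.

Definition rooted_mp_homotopy (A B : pt -> Prop) (H : pt -> R -> pt)
    (f g : pt -> pt) : Prop :=
  (forall x s, A x -> 0 <= s <= 1 -> B (H x s)) /\
  (forall x, A x -> H x 0 = f x) /\
  (forall x, A x -> H x 1 = g x) /\
  (forall s, 0 <= s <= 1 -> H Root s = Root) /\
  (forall x s, A x -> 0 <= s <= 1 -> forall eps, 0 < eps ->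
     exists delta, 0 < delta /\
     forall y r, A y -> 0 <= r <= 1 -> dist x y < delta -> Rabs (s - r) < delta ->
       dist (H x s) (H y r) < eps) /\
  (forall M, 0 < M -> exists N, 0 < N /\
     forall x s, A x -> 0 <= s <= 1 -> dist Root (H x s) < M -> dist Root x < N).

Definition rooted_mp_homotopy_equivalence : Prop :=
  exists f g : pt -> pt,
    rooted_map Tall Tinf f /\ rooted_map Tinf Tall g /\
    (exists H, rooted_mp_homotopy Tall Tall H (fun x => g (f x)) (fun x => x)) /\
    (exists H, rooted_mp_homotopy Tinf Tinf H (fun x => f (g x)) (fun x => x)).

Definition deformation_retraction : Prop :=
  exists H : pt -> R -> pt,
    rooted_mp_homotopy Tall Tall H (fun x => x) (fun x => H x 1) /\
    (forall x, Tinf (H x 1)) /\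
    (forall x s, Tinf x -> 0 <= s <= 1 -> H x s = x).

End InverseSequenceTree.

(* Main.v *)
Require Import Defs.
From Stdlib Require Import ZArith Reals Lra Lia Psatz ClassicalEpsilon Classical ProofIrrelevance.
Open Scope R_scope.

Section S.
Context (X : nat -> Type) (p : forall n, X (S n) -> X n).
Local Notation V := (vtx X).
Local Notation ancX := (anc X p).
Local Notation lv := (lvl X).
Local Notation parX := (par X p).

Lemma lvl_par v : lv (parX v) = pred (lv v).
Proof. destruct v as [[|n] x]; reflexivity. Qed.

Lemma lvl_iter n v : lv (Nat.iter n parX v) = (lv v - n)%nat.
Proof.
  induction n; simpl. lia. rewrite lvl_par, IHn. lia.
Qed.

Lemma lvl_anc k v : (k <= lv v)%nat -> lv (ancX k v) = k.
Proof. intros. unfold anc. rewrite lvl_iter. lia. Qed.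

Lemma anc_self v : ancX (lv v) v = v.
Proof. unfold anc. rewrite Nat.sub_diag. reflexivity. Qed.

Lemma anc_anc k j v : (k <= j)%nat -> (j <= lv v)%nat -> ancX k (ancX j v) = ancX k v.
Proof.
  intros. unfold anc at 1. rewrite lvl_anc by lia. unfold anc.
  rewrite <- Nat.iter_add. f_equal. lia.
Qed.

Lemma vtx_at (y : V) n : lv y = n -> exists x : X n, y = existT X n x.
Proof. destruct y as [m x]. simpl. intros ->. eauto. Qed.

Fixpoint cntP (Q : nat -> Prop) (K : nat) : nat :=
  match K with
  | O => O
  | S k => (cntP Q k + (if excluded_middle_informative (Q k) then 1 else 0))%nat
  end.

Lemma cc_cntP x y K : common_cnt X p x y K = cntP (fun k => ancX k x = ancX k y) K.
Proof. induction K; simpl; auto. Qed.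

Lemma cntP_le Q K : (cntP Q K <= K)%nat.
Proof. induction K; simpl; auto. destruct excluded_middle_informative; lia. Qed.

Lemma cntP_all Q K : (forall j, (j < K)%nat -> Q j) -> cntP Q K = K.
Proof.
  induction K; simpl; auto. intros H. rewrite IHK by (intros; apply H; lia).
  destruct excluded_middle_informative as [_|n]; [lia|]. exfalso; apply n, H; lia.
Qed.

Section Down.
Variable Q : nat -> Prop.
Variable B : nat.
Hypothesis down : forall i j, (i <= j)%nat -> (j < B)%nat -> Q j -> Q i.

Lemma cntP_true K j : (K <= B)%nat -> (j < cntP Q K)%nat -> Q j.
Proof.
  induction K; simpl; intros HK Hj. lia.
  destruct excluded_middle_informative as [q|q].
  - pose proof (cntP_le Q K). apply (down j K); auto; lia.
  - apply IHK; lia.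
Qed.

Lemma cntP_false K j0 : (K <= B)%nat -> ~ Q j0 -> (cntP Q K <= j0)%nat.
Proof.
  induction K; simpl; intros HK Hq. lia.
  destruct (Nat.le_gt_cases K j0).
  - pose proof (cntP_le Q K). destruct excluded_middle_informative.
    + destruct (Nat.eq_dec K j0). subst; contradiction. lia.
    + lia.
  - destruct excluded_middle_informative as [q|q].
    + exfalso. apply Hq. apply (down j0 K); auto; lia.
    + rewrite Nat.add_0_r. apply IHK; auto; lia.
Qed.

Lemma cntP_stop K : (K <= B)%nat -> (cntP Q K < K)%nat -> ~ Q (cntP Q K).
Proof.
  induction K; simpl; intros HK Hlt. lia.
  destruct excluded_middle_informative as [q|q].
  - rewrite (cntP_all Q K) in Hlt. lia. intros j Hj. apply (down j K); auto; lia.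
  - rewrite Nat.add_0_r in *. destruct (Nat.eq_dec (cntP Q K) K) as [e|e].
    + rewrite e. auto.
    + apply IHK. lia. pose proof (cntP_le Q K). lia.
Qed.

Lemma cntP_min K K' : (K' <= K)%nat -> (K <= B)%nat ->
  cntP Q K' = Nat.min (cntP Q K) K'.
Proof.
  intros H1 H2. set (c := cntP Q K).
  destruct (Nat.le_gt_cases K' c).
  - rewrite Nat.min_r by auto. apply cntP_all. intros j Hj. apply (cntP_true K); auto. lia.
  - rewrite Nat.min_l by lia.
    assert (Hc : ~ Q c). { apply cntP_stop. auto. lia. }
    pose proof (cntP_false K' c ltac:(lia) Hc).
    destruct (Nat.eq_dec (cntP Q K') c) as [e|e]; auto.
    assert (Hlt : (cntP Q K' < K')%nat) by lia.
    exfalso. apply (cntP_stop K' ltac:(lia) Hlt). apply (cntP_true K); auto. lia.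
Qed.
End Down.

Lemma cntP_ext Q Q' K : (forall j, (j < K)%nat -> (Q j <-> Q' j)) -> cntP Q K = cntP Q' K.
Proof.
  induction K; simpl; auto. intros H. rewrite IHK by (intros; apply H; lia).
  destruct (excluded_middle_informative (Q K)), (excluded_middle_informative (Q' K)); auto.
  - exfalso. apply n, H; auto.
  - exfalso. apply n, H; auto.
Qed.


Lemma agree_down x y : forall i j, (i <= j)%nat -> (j < S (Nat.min (lv x) (lv y)))%nat ->
  ancX j x = ancX j y -> ancX i x = ancX i y.
Proof.
  intros i j H1 H2 E. rewrite <- (anc_anc i j x), <- (anc_anc i j y) by lia. now rewrite E.
Qed.

Definition mun x y := common_cnt X p x y (S (Nat.min (lv x) (lv y))).

Lemma meet_anc x y k l : (k <= lv x)%nat -> (l <= lv y)%nat ->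
  common_cnt X p (ancX k x) (ancX l y) (S (Nat.min k l)) = Nat.min (mun x y) (S (Nat.min k l)).
Proof.
  intros Hk Hl. unfold mun. rewrite !cc_cntP.
  rewrite (cntP_ext _ (fun j => ancX j x = ancX j y)).
  - apply (cntP_min _ (S (Nat.min (lv x) (lv y)))); [apply agree_down|lia|lia].
  - intros j Hj. rewrite !anc_anc by lia. tauto.
Qed.

Lemma mun_le x y : (mun x y <= S (Nat.min (lv x) (lv y)))%nat.
Proof. unfold mun. rewrite cc_cntP. apply cntP_le. Qed.

Lemma mun_self x : mun x x = S (lv x).
Proof. unfold mun. rewrite cc_cntP, Nat.min_id. apply cntP_all. auto. Qed.

Definition kof (h : R) : nat := Z.to_nat (- up (- h)).

Lemma kof_spec h : 0 < h -> INR (kof h) < h <= INR (kof h) + 1.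
Proof.
  intros Hh. destruct (archimed (- h)) as [A1 A2]. unfold kof.
  set (z := up (-h)) in *.
  assert (Hz : (z < 1)%Z). { apply lt_IZR. lra. }
  rewrite INR_IZR_INZ, Z2Nat.id by lia. rewrite opp_IZR. lra.
Qed.

Lemma kof_unique k h : INR k < h <= INR k + 1 -> kof h = k.
Proof.
  intros Hk. assert (Hh : 0 < h) by (pose proof (pos_INR k); lra).
  destruct (kof_spec h Hh) as [B1 B2].
  assert (kof h < S k)%nat by (apply INR_lt; rewrite S_INR; lra).
  assert (k < S (kof h))%nat by (apply INR_lt; rewrite S_INR; lra).
  lia.
Qed.

Definition one_t : {t : R | 0 < t <= 1} := exist _ 1 (conj Rlt_0_1 (Rle_refl 1)).

Definition mkt (r : R) : {t : R | 0 < t <= 1} :=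
  match Rlt_le_dec 0 r with
  | left H1 => match Rle_lt_dec r 1 with
               | left H2 => exist _ r (conj H1 H2)
               | right _ => one_t end
  | right _ => one_t end.

Lemma mkt_val r : 0 < r <= 1 -> proj1_sig (mkt r) = r.
Proof.
  intros [H1 H2]. unfold mkt. destruct Rlt_le_dec; [|exfalso; lra]. destruct Rle_lt_dec; [|exfalso; lra]. reflexivity.
Qed.

Lemma sig_ext (a b : {t : R | 0 < t <= 1}) : proj1_sig a = proj1_sig b -> a = b.
Proof. destruct a, b; simpl. intros ->. f_equal. apply proof_irrelevance. Qed.

Definition P (x : V) (h : R) : pt X :=
  match Rle_lt_dec h 0 with
  | left _ => Root X
  | right _ => Pt X (ancX (kof h) x) (mkt (h - INR (kof h)))
  end.

Lemma kof_le x h : 0 < h -> h <= INR (lv x) + 1 -> (kof h <= lv x)%nat.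
Proof.
  intros H1 H2. destruct (kof_spec h H1). assert (kof h < S (lv x))%nat by (apply INR_lt; rewrite S_INR; lra). lia.
Qed.

Lemma height_P x h : 0 <= h -> h <= INR (lv x) + 1 -> height X (P x h) = h.
Proof.
  intros H1 H2. unfold P. destruct Rle_lt_dec. simpl; lra.
  simpl. rewrite lvl_anc by (apply kof_le; lra). destruct (kof_spec h r).
  rewrite mkt_val by lra. lra.
Qed.

Lemma P_pt x t : P x (height X (Pt X x t)) = Pt X x t.
Proof.
  destruct t as [t Ht]. change (height X (Pt X x (exist _ t Ht))) with (INR (lv x) + t). destruct Ht as [Ht1 Ht2]. unfold P. pose proof (pos_INR (lv x)).
  destruct Rle_lt_dec. { exfalso; lra. }
  rewrite (kof_unique (lv x)) by lra. rewrite anc_self. f_equal. apply sig_ext.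
  rewrite mkt_val; simpl; lra.
Qed.

Lemma P_anc x j h : 0 <= h -> h <= INR j + 1 -> (j <= lv x)%nat -> P (ancX j x) h = P x h.
Proof.
  intros H1 H2 H3. unfold P. destruct Rle_lt_dec; auto.
  assert (kof h <= j)%nat. { destruct (kof_spec h r). assert (kof h < S j)%nat by (apply INR_lt; rewrite S_INR; lra). lia. }
  rewrite anc_anc by lia. reflexivity.
Qed.

Lemma dist_root_l a : Defs.dist X p (Root X) a = height X a.
Proof. destruct a; reflexivity. Qed.
Lemma dist_root_r a : Defs.dist X p a (Root X) = height X a.
Proof. destruct a; reflexivity. Qed.

Lemma INR_min a b : INR (Nat.min a b) = Rmin (INR a) (INR b).
Proof.
  destruct (Nat.le_ge_cases a b).
  - rewrite Nat.min_l by auto. rewrite Rmin_left; auto. apply le_INR; auto.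
  - rewrite Nat.min_r by auto. rewrite Rmin_right; auto. apply le_INR; auto.
Qed.

Definition gg (m u v : R) := u + v - 2 * Rmin m (Rmin u v).

Lemma KL x y h1 h2 : 0 <= h1 -> h1 <= INR (lv x) + 1 -> 0 <= h2 -> h2 <= INR (lv y) + 1 ->
  Defs.dist X p (P x h1) (P y h2) = gg (INR (mun x y)) h1 h2.
Proof.
  intros A1 A2 A3 A4. unfold gg. pose proof (pos_INR (mun x y)) as Hm.
  destruct (Rle_lt_dec h1 0) as [e1|e1].
  { assert (h1 = 0) by lra. subst. unfold P at 1. destruct Rle_lt_dec; [|exfalso; lra].
    rewrite dist_root_l, height_P by lra. unfold Rmin; repeat destruct Rle_dec; lra. }
  destruct (Rle_lt_dec h2 0) as [e2|e2].
  { assert (h2 = 0) by lra. subst. unfold P at 2. destruct Rle_lt_dec; [|exfalso; lra].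
    rewrite dist_root_r, height_P by lra. unfold Rmin; repeat destruct Rle_dec; lra. }
  pose proof (height_P x h1 ltac:(lra) A2) as Hx.
  pose proof (height_P y h2 ltac:(lra) A4) as Hy.
  pose proof (kof_le x h1 e1 A2). pose proof (kof_le y h2 e2 A4).
  destruct (kof_spec h1 e1). destruct (kof_spec h2 e2).
  unfold P in *. destruct (Rle_lt_dec h1 0); [exfalso; lra|]. destruct (Rle_lt_dec h2 0); [exfalso; lra|].
  unfold Defs.dist. rewrite Hx, Hy. unfold meet_height. rewrite !lvl_anc by auto.
  rewrite meet_anc by auto. rewrite INR_min, S_INR, INR_min.
  f_equal. f_equal.
  set (m := INR (mun x y)) in *. set (k1 := INR (kof h1)) in *. set (k2 := INR (kof h2)) in *.
  unfold Rmin; repeat destruct Rle_dec; lra.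
Qed.


Lemma nat_above (r : R) : exists n : nat, r < INR n.
Proof.
  destruct (archimed r) as [A1 _]. exists (Z.to_nat (up r)).
  destruct (Z.le_gt_cases 0 (up r)).
  - rewrite INR_IZR_INZ, Z2Nat.id by auto. lra.
  - assert (IZR (up r) < 0) by (apply IZR_lt; lia). pose proof (pos_INR (Z.to_nat (up r))). lra.
Qed.

Lemma path_const (Q : R -> Prop) a b : a <= b ->
  (forall t, a <= t <= b -> exists d, 0 < d /\ forall r, a <= r <= b -> Rabs (t - r) < d -> (Q t <-> Q r)) ->
  Q a -> Q b.
Proof.
  intros Hab Hloc Qa.
  set (E := fun t => a <= t <= b /\ forall r, a <= r <= t -> Q r).
  assert (Eb : bound E). { exists b. intros t [Ht _]. lra. }
  assert (Ea : exists t, E t). { exists a. split. lra. intros r Hr. replace r with a by lra. auto. }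
  destruct (completeness E Eb Ea) as [c [Hc1 Hc2]].
  assert (ca : a <= c). { apply Hc1. destruct Ea as [t Et]. split. lra. intros r Hr. replace r with a by lra. auto. }
  assert (cb : c <= b). { apply Hc2. intros t [Ht _]. lra. }
  destruct (Hloc c (conj ca cb)) as [d [Hd Hl]].
  assert (Ht : exists t, E t /\ c - d < t).
  { apply NNPP. intro N. assert (c <= c - d). { apply Hc2. intros t Et. apply Rnot_lt_le. intro. apply N. eauto. } lra. }
  destruct Ht as [t [[Ht1 Ht2] Ht3]].
  assert (tc : t <= c) by (apply Hc1; split; auto).
  assert (Qc : Q c). { apply (Hl t). lra. apply Rabs_def1; lra. apply Ht2. lra. }
  set (t' := Rmin (c + d/2) b).
  assert (tb : t' <= b /\ t' <= c + d/2) by (unfold t'; unfold Rmin; destruct Rle_dec; lra).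
  assert (Et' : E t').
  { split. unfold t'; unfold Rmin; destruct Rle_dec; lra. intros r Hr.
    destruct (Rle_lt_dec r t). apply Ht2; lra.
    apply (Hl r). lra. apply Rabs_def1; lra. auto. }
  assert (t' <= c) by (apply Hc1; auto).
  assert (t' = b). { unfold t' in *. unfold Rmin in *. destruct Rle_dec; lra. }
  destruct Et' as [_ HE]. apply HE. lra.
Qed.

Lemma height_nonneg a : 0 <= height X a.
Proof. destruct a as [|x [t Ht]]; simpl. lra. pose proof (pos_INR (lv x)). lra. Qed.

Lemma dist_le_h a b : Defs.dist X p a b <= height X a + height X b.
Proof.
  destruct a as [|x t]; destruct b as [|y u]; simpl Defs.dist;
    try (pose proof (height_nonneg (Pt X x t))); try (pose proof (height_nonneg (Pt X y u))); simpl height in *; try lra.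
  unfold meet_height. pose proof (pos_INR (common_cnt X p x y (S (Nat.min (lv x) (lv y))))).
  set (h1 := INR (lv x) + proj1_sig t) in *. set (h2 := INR (lv y) + proj1_sig u) in *.
  unfold Rmin; repeat destruct Rle_dec; lra.
Qed.

Lemma h_le_dist a b : height X b <= height X a + Defs.dist X p a b.
Proof.
  destruct a as [|x t]; destruct b as [|y u]; simpl Defs.dist;
    try (pose proof (height_nonneg (Pt X x t))); try (pose proof (height_nonneg (Pt X y u))); simpl height in *; try lra.
  unfold meet_height. pose proof (pos_INR (common_cnt X p x y (S (Nat.min (lv x) (lv y))))).
  set (h1 := INR (lv x) + proj1_sig t) in *. set (h2 := INR (lv y) + proj1_sig u) in *.
  unfold Rmin; repeat destruct Rle_dec; lra.
Qed.

Lemma mun_sym x y : mun x y = mun y x.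
Proof.
  unfold mun. rewrite !cc_cntP, Nat.min_comm. apply cntP_ext. intros; split; auto.
Qed.

Lemma dist_sym a b : Defs.dist X p a b = Defs.dist X p b a.
Proof.
  destruct a as [|x t]; destruct b as [|y u]; simpl Defs.dist; auto.
  unfold meet_height. fold (mun x y). fold (mun y x). rewrite mun_sym.
  rewrite (Rmin_comm (INR (lv x) + proj1_sig t)). ring.
Qed.

Lemma bounded_ball (r : R) : Defs.bounded X p (fun z => height X z < r).
Proof.
  exists (2 * r). intros y z Hy Hz. pose proof (dist_le_h y z). lra.
Qed.

Definition Cw (n0 : nat) (w : V) (a : pt X) : Prop :=
  match a with Root _ => False | Pt _ x _ => (n0 <= lv x)%nat /\ ancX n0 x = w end.

Lemma sep n0 w a b : Cw n0 w a -> ~ Cw n0 w b -> INR n0 + 2 <= height X a -> INR n0 + 2 <= height X b ->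
  4 <= Defs.dist X p a b.
Proof.
  intros Ca Cb Ha Hb. destruct a as [|x t]; [destruct Ca|]. destruct b as [|y u].
  { simpl in Hb. pose proof (pos_INR n0). lra. }
  destruct Ca as [Ca1 Ca2]. simpl in Ha, Hb. destruct t as [t [t1 t2]]; destruct u as [u [u1 u2]]. simpl in Ha, Hb.
  assert (Hy : (n0 < lv y)%nat). { apply INR_lt. lra. }
  assert (Hd : ancX n0 x <> ancX n0 y). { intro E. apply Cb. simpl. split. lia. congruence. }
  assert (Hm : (mun x y <= n0)%nat).
  { unfold mun. rewrite cc_cntP. apply (cntP_false _ (S (Nat.min (lv x) (lv y)))); auto.
    apply agree_down. }
  apply le_INR in Hm. unfold Defs.dist. unfold meet_height. fold (mun x y). simpl height.
  unfold Rmin; repeat destruct Rle_dec; lra.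
Qed.

Lemma Cw_height n0 n w b : (forall z : V, (n0 <= lv z)%nat -> ancX n0 z = w -> (lv z < n)%nat) ->
  Cw n0 w b -> height X b <= INR n.
Proof.
  intros D Cb. destruct b as [|y [u [u1 u2]]]; [destruct Cb|]. destruct Cb as [C1 C2].
  specialize (D y C1 C2). assert (E : INR (S (lv y)) <= INR n) by (apply le_INR; lia). rewrite S_INR in E. simpl. lra.
Qed.

Lemma dist_self a : Defs.dist X p a a = 0.
Proof.
  destruct a as [|x [t [t1 t2]]]. reflexivity. unfold Defs.dist, meet_height. fold (mun x x).
  rewrite mun_self, S_INR. simpl height. pose proof (pos_INR (lv x)). unfold Rmin; repeat destruct Rle_dec; lra.
Qed.

Lemma Fheight (F : R -> pt X) : F 0 = Root X ->
  (forall s t, 0 <= s -> 0 <= t -> Defs.dist X p (F s) (F t) = Rabs (s - t)) ->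
  forall t, 0 <= t -> height X (F t) = t.
Proof.
  intros F0 Fi t Ht. rewrite <- dist_root_l, <- F0, Fi by lra. rewrite Rabs_left1 by lra. lra.
Qed.

Lemma equiv_ML : rooted_mp_homotopy_equivalence X p -> MittagLeffler X p.
Proof.
  intros [f [g [[fT [fR [fC fP]]] [[gT [gR [gC gP]]] [[H [HB [H0 [H1 [HRt [HC HP]]]]]] _]]]]].
  apply NNPP; intro notML.
  apply not_all_ex_not in notML. destruct notML as [n0 notML].
  destruct (HP (INR n0 + 2)) as [N [HN HPN]]. { pose proof (pos_INR n0); lra. }
  assert (Hg : forall r, 0 < r -> exists Mg, forall y, Tinf X p y -> height X (g y) < r -> height X y <= Mg).
  { intros r Hr. destruct (gP _ (bounded_ball r)) as [Mg HM]. exists Mg. intros y Ty Hy.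
    specialize (HM y (Root X) (conj Ty Hy)). rewrite gR in HM. rewrite dist_root_r in HM. apply HM.
    split. left; auto. simpl. lra. }
  destruct (Hg (INR n0 + 2)) as [Mg1 HMg1]. { pose proof (pos_INR n0); lra. }
  destruct (fP _ (bounded_ball (Mg1 + 1))) as [Mf HMf].
  assert (HMf' : forall y, height X (f y) < Mg1 + 1 -> height X y <= Mf).
  { intros y Hy. specialize (HMf y (Root X) (conj I Hy)). rewrite dist_root_r in HMf. apply HMf.
    split. exact I. rewrite fR. simpl. pose proof (height_nonneg (f y)). lra. }
  destruct (nat_above (Rmax N Mf)) as [K HK].
  set (n1 := S (Nat.max n0 K)).
  assert (n01 : (n0 < n1)%nat) by lia.
  assert (HKn1 : INR K <= INR n1) by (apply le_INR; lia).
  apply not_ex_all_not with (n := n1) in notML.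
  assert (notML' : exists n, (n1 < n)%nat /\ exists w : V,
     ~ ((exists x : X n, ancX n0 (existT X n x) = w) <-> (exists x : X n1, ancX n0 (existT X n1 x) = w))).
  { apply NNPP; intro C. apply notML. split; auto. intros n Hn w. apply NNPP. intro C2. apply C. eauto. }
  destruct notML' as [n [Hn [w Hw]]].
  assert (Hw2 : ~ (exists x : X n, ancX n0 (existT X n x) = w) /\ True).
  { split.
    - intros [x Ex]. apply Hw. split; intros _. 2: eauto.
      destruct (vtx_at (ancX n1 (existT X n x)) n1) as [x' Ex']. apply lvl_anc. simpl; lia.
      exists x'. rewrite <- Ex', <- Ex. apply anc_anc. lia. simpl; lia.
    - exact I. }
  destruct Hw2 as [Dead _].
  assert (Hx1 : exists x : X n1, ancX n0 (existT X n1 x) = w).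
  { apply NNPP; intro C. apply Hw. split; intro E; exfalso; auto. }
  destruct Hx1 as [x1 Ex1].
  assert (D : forall z : V, (n0 <= lv z)%nat -> ancX n0 z = w -> (lv z < n)%nat).
  { intros z Hz Ez. destruct (Nat.lt_ge_cases (lv z) n) as [|Hge]; auto. exfalso. apply Dead.
    destruct (vtx_at (ancX n z) n) as [x Ex]. apply lvl_anc; lia.
    exists x. rewrite <- Ex, anc_anc; auto; lia. }
  set (av := existT X n1 x1 : V). set (a := Pt X av one_t).
  assert (ha : height X a = INR n1 + 1) by reflexivity.
  assert (HaN : N < height X a) by (pose proof (Rmax_l N Mf); lra).
  assert (HaMf : Mf < height X a) by (pose proof (Rmax_r N Mf); lra).
  assert (Step1 : forall s, 0 <= s <= 1 -> INR n0 + 2 <= height X (H a s)).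
  { intros s Hs. apply Rnot_lt_le. intro Hlt. rewrite <- dist_root_l in Hlt.
    specialize (HPN a s I Hs Hlt). rewrite dist_root_l in HPN. lra. }
  assert (Ca : Cw n0 w a) by (simpl; split; [lia|exact Ex1]).
  assert (Step2 : Cw n0 w (H a (1 - 1))).
  { apply (path_const (fun t => Cw n0 w (H a (1 - t))) 0 1). lra.
    - intros t Ht. destruct (HC a (1-t) I ltac:(lra) 1 Rlt_0_1) as [d [Hd Hl]]. exists d. split; auto.
      intros r Hr Htr.
      assert (dd : Defs.dist X p (H a (1-t)) (H a (1-r)) < 1).
      { apply Hl. exact I. lra. rewrite dist_self. auto. replace (1 - t - (1 - r)) with (- (t - r)) by ring.
        rewrite Rabs_Ropp. auto. }
      pose proof (Step1 (1 - t) ltac:(lra)). pose proof (Step1 (1 - r) ltac:(lra)).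
      split; intros Cx; apply NNPP; intro Cy.
      + pose proof (sep _ _ _ _ Cx Cy ltac:(auto) ltac:(auto)). lra.
      + pose proof (sep _ _ _ _ Cx Cy ltac:(auto) ltac:(auto)) as Hs. rewrite dist_sym in Hs. lra.
    - rewrite Rminus_0_r, H1 by exact I. auto. }
  replace (1 - 1) with 0 in Step2 by ring. rewrite H0 in Step2 by exact I.
  destruct (fT a I) as [Eq | [F [F0 [Fi [s0 [Hs0 Fs0]]]]]].
  { rewrite Eq, gR in Step2. destruct Step2. }
  pose proof (Fheight F F0 Fi) as Fh.
  assert (TinfF : forall t, 0 <= t -> Tinf X p (F t)).
  { intros t Ht. right. exists F. split; auto. split; auto. exists t. auto. }
  destruct (Hg (INR n + 1)) as [Mg2 HMg2]. { pose proof (pos_INR n); lra. }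
  set (T := Rmax s0 Mg2 + 1).
  assert (Ts0 : s0 <= T) by (unfold T; pose proof (Rmax_l s0 Mg2); lra).
  assert (TMg : Mg2 < T) by (unfold T; pose proof (Rmax_r s0 Mg2); lra).
  assert (FT : ~ Cw n0 w (g (F T))).
  { intro C. pose proof (Cw_height n0 n w _ D C).
    assert (HT : height X (F T) <= Mg2) by (apply HMg2; [apply TinfF; lra | lra]).
    rewrite Fh in HT by lra. lra. }
  assert (Ex : exists t, s0 <= t <= T /\ height X (g (F t)) < INR n0 + 2).
  { apply NNPP; intro C. apply FT. apply (path_const (fun t => Cw n0 w (g (F t))) s0 T); auto.
    - intros t Ht. destruct (gC (F t) (TinfF t ltac:(lra)) 1 Rlt_0_1) as [d [Hd Hl]]. exists d. split; auto.
      intros r Hr Htr.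
      assert (dd : Defs.dist X p (g (F t)) (g (F r)) < 1).
      { apply Hl. apply TinfF; lra. rewrite Fi by lra. auto. }
      assert (INR n0 + 2 <= height X (g (F t))) by (apply Rnot_lt_le; intro; apply C; exists t; auto).
      assert (INR n0 + 2 <= height X (g (F r))) by (apply Rnot_lt_le; intro; apply C; exists r; auto).
      split; intros Cx; apply NNPP; intro Cy.
      + pose proof (sep _ _ _ _ Cx Cy ltac:(auto) ltac:(auto)). lra.
      + pose proof (sep _ _ _ _ Cx Cy ltac:(auto) ltac:(auto)) as Hs. rewrite dist_sym in Hs. lra.
    - rewrite Fs0. auto. }
  destruct Ex as [t [Ht Hgt]].
  assert (HT : height X (F t) <= Mg1) by (apply HMg1; auto; apply TinfF; lra).
  rewrite Fh in HT by lra.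
  assert (Hfa : height X (f a) < Mg1 + 1) by (rewrite <- Fs0, Fh; lra).
  apply HMf' in Hfa. lra.
Qed.

Lemma RL2 m t h1 h2 b1 b2 : 0 <= m -> 0 <= t <= 1 -> 0 <= h1 -> 0 <= h2 -> 0 <= b1 -> 0 <= b2 ->
  ((b1 = b2 /\ b1 <= h1 /\ b1 <= h2 /\ b1 <= m) \/ (m <= b1 /\ m <= b2)) ->
  gg m (Rmin h1 b1 + t * (h1 - Rmin h1 b1)) (Rmin h2 b2 + t * (h2 - Rmin h2 b2)) <= gg m h1 h2.
Proof.
  intros Hm Ht H1 H2 B1 B2 [[E [C1 [C2 C3]]]|[C1 C2]].
  - subst b2. rewrite !Rmin_right by lra.
    assert (0 <= t * (h1 - b1) <= h1 - b1) by nra.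
    assert (0 <= t * (h2 - b1) <= h2 - b1) by nra.
    unfold gg. unfold Rmin at 1 2 3 4; repeat destruct Rle_dec; nra.
  - assert (E1 : Rmin h1 b1 = h1 \/ (Rmin h1 b1 = b1 /\ b1 <= h1)) by (unfold Rmin; destruct Rle_dec; [left|right]; lra).
    assert (E2 : Rmin h2 b2 = h2 \/ (Rmin h2 b2 = b2 /\ b2 <= h2)) by (unfold Rmin; destruct Rle_dec; [left|right]; lra).
    set (c1 := Rmin h1 b1) in *. set (c2 := Rmin h2 b2) in *.
    assert (0 <= t * (h1 - c1) <= h1 - c1) by (destruct E1; nra).
    assert (0 <= t * (h2 - c2) <= h2 - c2) by (destruct E2; nra).
    set (u1 := t * (h1 - c1)) in *. set (u2 := t * (h2 - c2)) in *.
    unfold gg. unfold Rmin at 1 2 3 4; repeat destruct Rle_dec; lra.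
Qed.

Lemma RL1 m u v v' : Rabs (gg m u v - gg m u v') <= Rabs (v - v').
Proof. unfold gg, Rmin. repeat destruct Rle_dec; unfold Rabs; repeat destruct Rcase_abs; lra. Qed.

Lemma RL3 h c s r : 0 <= c <= h ->
  Rabs ((c + (1 - s) * (h - c)) - (c + (1 - r) * (h - c))) <= Rabs (s - r) * h.
Proof.
  intros Hc. replace ((c + (1 - s) * (h - c)) - (c + (1 - r) * (h - c))) with ((r - s) * (h - c)) by ring.
  rewrite Rabs_mult. rewrite (Rabs_right (h - c)) by lra. rewrite <- Rabs_Ropp.
  replace (- (r - s)) with (s - r) by ring. apply Rmult_le_compat_l. apply Rabs_pos. lra.
Qed.

Definition alive (v : V) : Prop :=
  forall n, (lv v <= n)%nat -> exists y : V, lv y = n /\ ancX (lv v) y = v.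

Lemma alive_anc v k : alive v -> (k <= lv v)%nat -> alive (ancX k v).
Proof.
  intros A Hk n Hn. rewrite lvl_anc in * by auto.
  destruct (A (Nat.max n (lv v)) ltac:(lia)) as [y' [Ly Ay]].
  exists (ancX n y'). split. apply lvl_anc; lia.
  rewrite anc_anc by lia. rewrite <- Ay. rewrite anc_anc by lia. auto.
Qed.

Section ML.
Hypothesis HML : MittagLeffler X p.

Lemma AL2 j : exists B, forall y, (j <= lv y)%nat -> (B < lv y)%nat -> alive (ancX j y).
Proof.
  destruct (HML j) as [n1 [Hj Hi]]. exists n1. intros y Hy Hb n Hn.
  rewrite lvl_anc in * by auto.
  destruct (Nat.le_gt_cases n (lv y)).
  - exists (ancX n y). split. apply lvl_anc; auto. apply anc_anc; lia.
  - destruct (Hi n ltac:(lia) (ancX j y)) as [_ Hr].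
    destruct Hr as [x Ex].
    + destruct (vtx_at (ancX n1 y) n1) as [x Ex]. apply lvl_anc; lia.
      exists x. rewrite <- Ex. apply anc_anc; lia.
    + exists (existT X n x). split; auto.
Qed.

Lemma AL3 v : alive v -> exists c, lv c = S (lv v) /\ ancX (lv v) c = v /\ alive c.
Proof.
  intros A. destruct (AL2 (S (lv v))) as [B HB].
  destruct (A (Nat.max (S B) (S (lv v))) ltac:(lia)) as [y [Ly Ay]].
  exists (ancX (S (lv v)) y). split. apply lvl_anc; lia. split.
  rewrite anc_anc by lia. auto. apply HB; lia.
Qed.

Lemma P_root x h : h <= 0 -> P x h = Root X.
Proof. intros. unfold P. destruct Rle_lt_dec; auto. exfalso; lra. Qed.

Lemma alive_Tinf v0 h : alive v0 -> 0 <= h -> h <= INR (lv v0) + 1 -> Tinf X p (P v0 h).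
Proof.
  intros A H1 H2.
  assert (nx : forall v : {v : V | alive v}, {c : {c : V | alive c} |
             lv (proj1_sig c) = S (lv (proj1_sig v)) /\ ancX (lv (proj1_sig v)) (proj1_sig c) = proj1_sig v}).
  { intros [v Av]. apply constructive_indefinite_description. destruct (AL3 v Av) as [c [C1 [C2 C3]]].
    exists (exist _ c C3). simpl. auto. }
  set (ch := fun k => proj1_sig (Nat.iter k (fun v => proj1_sig (nx v)) (exist _ v0 A))).
  assert (ch0 : ch 0%nat = v0) by reflexivity.
  assert (chS : forall k, lv (ch (S k)) = S (lv (ch k)) /\ ancX (lv (ch k)) (ch (S k)) = ch k).
  { intros k. clear ch0. unfold ch. simpl. destruct (nx _) as [c Hc]. simpl. auto. }
  assert (chl : forall k, lv (ch k) = (lv v0 + k)%nat).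
  { induction k. rewrite ch0. lia. rewrite (proj1 (chS k)). lia. }
  assert (cha : forall m k, (k <= m)%nat -> ancX (lv v0 + k) (ch m) = ch k).
  { induction m; intros k Hk.
    - replace k with 0%nat by lia. rewrite <- (chl 0%nat). apply anc_self.
    - destruct (Nat.eq_dec k (S m)). subst k. rewrite <- chl. apply anc_self.
      rewrite <- (anc_anc (lv v0 + k) (lv v0 + m)) by (rewrite ?chl; lia).
      rewrite <- (chl m), (proj2 (chS m)). apply IHm. lia. }
  set (Vb := fun k => ancX k (ch k)).
  assert (Vbl : forall k, lv (Vb k) = k) by (intros; apply lvl_anc; rewrite chl; lia).
  assert (Vba : forall j m, (j <= m)%nat -> ancX j (Vb m) = Vb j).
  { intros j m Hj. unfold Vb. rewrite anc_anc by (rewrite ?chl; lia).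
    rewrite <- (cha m j) by auto. rewrite anc_anc by (rewrite ?chl; lia). auto. }
  assert (Vb0 : Vb (lv v0) = v0).
  { unfold Vb. transitivity (ch 0%nat); [|exact ch0]. rewrite <- (cha (lv v0) 0%nat) by lia. rewrite Nat.add_0_r. reflexivity. }
  set (F := fun t => P (Vb (kof t)) t).
  assert (FP : forall m t, 0 <= t -> (kof t <= m)%nat -> F t = P (Vb m) t).
  { intros m t Ht Hm. unfold F. destruct (Rle_lt_dec t 0). rewrite !P_root; auto.
    destruct (kof_spec t r). rewrite <- (Vba (kof t) m) by auto. apply P_anc; auto; try lra. rewrite Vbl; auto. }
  right. exists F. split. { unfold F. apply P_root. lra. } split.
  - intros s t Hs Ht. rewrite (FP (Nat.max (kof s) (kof t)) s), (FP (Nat.max (kof s) (kof t)) t) by (auto; lia).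
    set (m := Nat.max (kof s) (kof t)).
    assert (Ls : s <= INR m + 1).
    { destruct (Rle_lt_dec s 0). pose proof (pos_INR m); lra. destruct (kof_spec s r).
      assert (INR (kof s) <= INR m) by (apply le_INR; lia). lra. }
    assert (Lt : t <= INR m + 1).
    { destruct (Rle_lt_dec t 0). pose proof (pos_INR m); lra. destruct (kof_spec t r).
      assert (INR (kof t) <= INR m) by (apply le_INR; lia). lra. }
    rewrite KL by (rewrite ?Vbl; lra). rewrite mun_self, Vbl, S_INR. unfold gg.
    unfold Rmin, Rabs; repeat destruct Rle_dec; repeat destruct Rcase_abs; lra.
  - exists h. split; auto. rewrite (FP (Nat.max (kof h) (lv v0))) by (auto; lia).
    rewrite <- Vb0 at 2. rewrite <- (Vba (lv v0) (Nat.max (kof h) (lv v0))) by lia.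
    symmetry. apply P_anc; auto. rewrite Vbl; lia.
Qed.
End ML.

Lemma Tinf_alive x t : Tinf X p (Pt X x t) -> alive x.
Proof.
  intros [E | [F [F0 [Fi [s [Hs Fs]]]]]]. discriminate.
  pose proof (Fheight F F0 Fi) as Fh.
  intros n Hn.
  assert (Hsh : s = height X (Pt X x t)) by (rewrite <- Fs, Fh; auto).
  destruct t as [t [t1 t2]]. simpl in Hsh.
  assert (Ln : INR (lv x) <= INR n) by (apply le_INR; auto).
  pose proof (pos_INR n).
  destruct (F (INR n + 1)) as [|y [u [u1 u2]]] eqn:Eb.
  { pose proof (Fh (INR n + 1) ltac:(lra)) as Hb. rewrite Eb in Hb. simpl in Hb. lra. }
  pose proof (Fh (INR n + 1) ltac:(lra)) as Hb. rewrite Eb in Hb. simpl in Hb.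
  assert (Ly : lv y = n).
  { assert (lv y < S n)%nat by (apply INR_lt; rewrite S_INR; lra).
    assert (n < S (lv y))%nat by (apply INR_lt; rewrite S_INR; lra). lia. }
  exists y. split; auto.
  pose proof (Fi s (INR n + 1) Hs ltac:(lra)) as Hd. rewrite Fs, Eb in Hd.
  rewrite Rabs_left1 in Hd by lra.
  unfold Defs.dist, meet_height in Hd. fold (mun x y) in Hd. simpl height in Hd.
  assert (Hm : INR (lv x) < INR (mun x y)).
  { pose proof (pos_INR (mun x y)). revert Hd. unfold Rmin; repeat destruct Rle_dec; intros; lra. }
  apply INR_lt in Hm.
  assert (Ag : ancX (lv x) x = ancX (lv x) y).
  { unfold mun in Hm. rewrite cc_cntP in Hm. apply (cntP_true _ (S (Nat.min (lv x) (lv y)))) in Hm; auto.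
    apply agree_down. }
  rewrite anc_self in Ag. auto.
Qed.

Definition Qa (x : V) := fun j => alive (ancX j x).
Definition beta (x : V) : nat := cntP (Qa x) (S (lv x)).

Lemma Qa_down x : forall i j, (i <= j)%nat -> (j < S (lv x))%nat -> Qa x j -> Qa x i.
Proof.
  unfold Qa. intros i j Hij Hj A. rewrite <- (anc_anc i j x) by lia. apply alive_anc; auto.
  rewrite lvl_anc; lia.
Qed.

Lemma beta_alive x : alive x -> beta x = S (lv x).
Proof. intros A. apply cntP_all. intros j Hj. apply alive_anc; auto. lia. Qed.

Lemma beta_dead x : ~ alive x -> (beta x <= lv x)%nat.
Proof. intros NA. apply (cntP_false (Qa x) (S (lv x))). apply Qa_down. auto. unfold Qa. rewrite anc_self. auto. Qed.

Lemma beta_le x : (beta x <= S (lv x))%nat.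
Proof. apply cntP_le. Qed.

Lemma beta_true x j : (j < beta x)%nat -> alive (ancX j x).
Proof. intros. apply (cntP_true (Qa x) (S (lv x)) (Qa_down x) (S (lv x))); auto. Qed.

Lemma beta_stop x : (beta x < S (lv x))%nat -> ~ alive (ancX (beta x) x).
Proof. intros. apply (cntP_stop (Qa x) (S (lv x)) (Qa_down x)); auto. Qed.

Lemma beta_rel x y : Nat.min (beta x) (mun x y) = Nat.min (beta y) (mun x y).
Proof.
  pose proof (mun_le x y). unfold beta.
  rewrite <- (cntP_min (Qa x) (S (lv x)) (Qa_down x) (S (lv x)) (mun x y)) by lia.
  rewrite <- (cntP_min (Qa y) (S (lv y)) (Qa_down y) (S (lv y)) (mun x y)) by lia.
  apply cntP_ext. intros j Hj. unfold Qa.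
  assert (E : ancX j x = ancX j y).
  { unfold mun in Hj. rewrite cc_cntP in Hj. apply (cntP_true _ (S (Nat.min (lv x) (lv y)))) in Hj; auto.
    apply agree_down. }
  rewrite E. tauto.
Qed.

Definition phi (x : V) (h s : R) := Rmin h (INR (beta x)) + (1 - s) * (h - Rmin h (INR (beta x))).

Definition Hf (a : pt X) (s : R) : pt X :=
  match a with
  | Root _ => Root X
  | Pt _ x t => P x (phi x (height X (Pt X x t)) s)
  end.

Lemma Hf_pt x t s : Hf (Pt X x t) s = P x (phi x (height X (Pt X x t)) s).
Proof. reflexivity. Qed.

Lemma phi_bounds x h s : 0 <= h -> 0 <= s <= 1 -> 0 <= phi x h s <= h /\ Rmin h (INR (beta x)) <= phi x h s.
Proof.
  intros Hh Hs. unfold phi. pose proof (pos_INR (beta x)).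
  assert (0 <= Rmin h (INR (beta x)) <= h) by (unfold Rmin; destruct Rle_dec; lra).
  set (c := Rmin h (INR (beta x))) in *. assert (0 <= (1 - s) * (h - c) <= h - c) by nra. lra.
Qed.

Lemma height_pt x t : 0 < height X (Pt X x t) <= INR (lv x) + 1 /\ INR (lv x) < height X (Pt X x t).
Proof. destruct t as [t [t1 t2]]. simpl. pose proof (pos_INR (lv x)). lra. Qed.

Lemma height_Hf x t s : 0 <= s <= 1 -> height X (Hf (Pt X x t) s) = phi x (height X (Pt X x t)) s.
Proof.
  intros Hs. rewrite Hf_pt. pose proof (height_pt x t). pose proof (phi_bounds x (height X (Pt X x t)) s ltac:(lra) Hs).
  apply height_P; lra.
Qed.

Lemma Hf_0 a : Hf a 0 = a.
Proof.
  destruct a as [|x t]. reflexivity. rewrite Hf_pt. unfold phi.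
  replace (Rmin (height X (Pt X x t)) (INR (beta x)) + (1 - 0) * (height X (Pt X x t) - Rmin (height X (Pt X x t)) (INR (beta x)))) with (height X (Pt X x t)) by ring.
  apply P_pt.
Qed.

Lemma Hf_alive x t s : alive x -> Hf (Pt X x t) s = Pt X x t.
Proof.
  intros A. rewrite Hf_pt. unfold phi. rewrite beta_alive by auto. pose proof (height_pt x t).
  rewrite Rmin_left by (rewrite S_INR; lra).
  replace (height X (Pt X x t) + (1 - s) * (height X (Pt X x t) - height X (Pt X x t))) with (height X (Pt X x t)) by ring.
  apply P_pt.
Qed.

Lemma Lip a b s r : 0 <= s <= 1 -> 0 <= r <= 1 ->
  Defs.dist X p (Hf a s) (Hf b r) <= Defs.dist X p a b + Rabs (s - r) * height X b.
Proof.
  intros Hs Hr. pose proof (Rabs_pos (s - r)). pose proof (height_nonneg b).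
  assert (0 <= Rabs (s - r) * height X b) by (apply Rmult_le_pos; auto).
  destruct a as [|x t]; destruct b as [|y u].
  - change (Hf (Root X) s) with (Root X). change (Hf (Root X) r) with (Root X). rewrite dist_self. lra.
  - change (Hf (Root X) s) with (Root X). rewrite !dist_root_l, height_Hf by auto.
    pose proof (height_pt y u). pose proof (phi_bounds y (height X (Pt X y u)) r ltac:(lra) Hr). lra.
  - change (Hf (Root X) r) with (Root X). rewrite !dist_root_r, height_Hf by auto.
    pose proof (height_pt x t). pose proof (phi_bounds x (height X (Pt X x t)) s ltac:(lra) Hs). lra.
  - pose proof (height_pt x t) as Hx. pose proof (height_pt y u) as Hy.
    set (h1 := height X (Pt X x t)) in *. set (h2 := height X (Pt X y u)) in *.
    pose proof (phi_bounds x h1 s ltac:(lra) Hs). pose proof (phi_bounds y h2 s ltac:(lra) Hs).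
    pose proof (phi_bounds y h2 r ltac:(lra) Hr).
    assert (Dab : Defs.dist X p (Pt X x t) (Pt X y u) = gg (INR (mun x y)) h1 h2) by reflexivity.
    rewrite !Hf_pt. fold h1 h2. rewrite Dab. rewrite KL by lra.
    pose proof (RL1 (INR (mun x y)) (phi x h1 s) (phi y h2 s) (phi y h2 r)) as L1.
    assert (L3 : Rabs (phi y h2 s - phi y h2 r) <= Rabs (s - r) * h2).
    { unfold phi. apply RL3. pose proof (pos_INR (beta y)). unfold Rmin; destruct Rle_dec; lra. }
    assert (L2 : gg (INR (mun x y)) (phi x h1 s) (phi y h2 s) <= gg (INR (mun x y)) h1 h2).
    { unfold phi. apply RL2; try lra; try apply pos_INR.
      pose proof (beta_rel x y) as BR. pose proof (mun_le x y).
      destruct (Nat.lt_ge_cases (beta x) (mun x y)).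
      - left. rewrite Nat.min_l in BR by lia.
        destruct (Nat.le_gt_cases (mun x y) (beta y)).
        { rewrite Nat.min_r in BR by lia. lia. }
        rewrite Nat.min_l in BR by lia. rewrite BR.
        assert (INR (beta y) <= INR (lv x)) by (apply le_INR; lia).
        assert (INR (beta y) <= INR (lv y)) by (apply le_INR; lia).
        assert (INR (beta y) <= INR (mun x y)) by (apply le_INR; lia).
        unfold h1, h2. destruct t as [t [t1 t2]]; destruct u as [u [u1 u2]]. simpl. lra.
      - right. rewrite Nat.min_r in BR by lia.
        split; apply le_INR; auto.
        destruct (Nat.le_gt_cases (mun x y) (beta y)); auto. rewrite Nat.min_l in BR by lia. lia. }
    pose proof (Rle_abs (gg (INR (mun x y)) (phi x h1 s) (phi y h2 r) - gg (INR (mun x y)) (phi x h1 s) (phi y h2 s))) as L4.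
    rewrite Rabs_minus_sym in L4. lra.
Qed.

Lemma Tinf_P (HML : MittagLeffler X p) x h : h <= INR (beta x) -> h <= INR (lv x) + 1 -> Tinf X p (P x h).
Proof.
  intros H1 H2. destruct (Rle_lt_dec h 0). { left. apply P_root. auto. }
  destruct (kof_spec h r) as [K1 K2]. pose proof (kof_le x h r H2).
  assert (Hk : (kof h < beta x)%nat) by (apply INR_lt; lra).
  rewrite <- (P_anc x (kof h)) by (auto; lra).
  apply alive_Tinf; auto. apply beta_true; auto. lra. rewrite lvl_anc by auto. lra.
Qed.

Lemma bound_dead (HML : MittagLeffler X p) Mn : exists Bm, forall j y, (j <= Mn)%nat -> (j <= lv y)%nat ->
  ~ alive (ancX j y) -> (lv y <= Bm)%nat.
Proof.
  induction Mn.
  - destruct (AL2 HML 0) as [B HB]. exists B. intros j y Hj Hy NA. replace j with 0%nat in * by lia.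
    destruct (Nat.le_gt_cases (lv y) B); auto. exfalso. apply NA. apply HB; auto.
  - destruct IHMn as [B1 HB1]. destruct (AL2 HML (S Mn)) as [B HB]. exists (Nat.max B B1).
    intros j y Hj Hy NA. destruct (Nat.eq_dec j (S Mn)).
    + subst j. destruct (Nat.le_gt_cases (lv y) B). lia. exfalso. apply NA. apply HB; auto.
    + specialize (HB1 j y ltac:(lia) Hy NA). lia.
Qed.

Lemma ML_DR : MittagLeffler X p -> deformation_retraction X p.
Proof.
  intros HML. exists Hf. split; [|split].
  - split; [intros; exact I|]. split; [intros; apply Hf_0|]. split; [intros; reflexivity|].
    split; [intros; reflexivity|]. split.
    + intros x s _ Hs eps Heps.
      pose proof (height_nonneg x) as Hx.
      set (A := height X x + 2).
      set (d := Rmin 1 (eps / (2 * A))).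
      assert (Hd1 : d <= 1) by apply Rmin_l. assert (Hd2 : d <= eps / (2 * A)) by apply Rmin_r.
      assert (Hd0 : 0 < d). { unfold d, Rmin. destruct Rle_dec. lra. apply Rdiv_lt_0_compat. lra. unfold A; lra. }
      assert (HdA : d * A <= eps / 2).
      { apply Rle_trans with (eps / (2 * A) * A). apply Rmult_le_compat_r. unfold A; lra. auto.
        right. field. unfold A; lra. }
      exists d. split; auto. intros y r _ Hr Dxy Dsr.
      pose proof (Lip x y s r Hs Hr). pose proof (h_le_dist x y).
      assert (Rabs (s - r) * height X y <= d * (height X x + 1)).
      { apply Rmult_le_compat. apply Rabs_pos. apply height_nonneg. lra. lra. }
      unfold A in HdA. lra.
    + intros M HM. destruct (nat_above M) as [Mn HMn]. destruct (bound_dead HML Mn) as [Bm HBm].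
      exists (Rmax M (INR Bm + 2)). split. { pose proof (Rmax_l M (INR Bm + 2)). lra. }
      intros a s _ Hs Ha. rewrite dist_root_l in *.
      pose proof (Rmax_l M (INR Bm + 2)). pose proof (Rmax_r M (INR Bm + 2)).
      destruct a as [|x t]. { simpl. lra. }
      destruct (classic (alive x)) as [A|NA].
      { rewrite Hf_alive in Ha by auto. lra. }
      pose proof (beta_dead x NA). pose proof (height_pt x t) as [Hp1 Hp2].
      assert (INR (beta x) <= INR (lv x)) by (apply le_INR; auto).
      rewrite height_Hf in Ha by auto.
      pose proof (phi_bounds x (height X (Pt X x t)) s ltac:(lra) Hs) as [_ Pb].
      rewrite Rmin_right in Pb by lra.
      assert (Hb : (beta x < Mn)%nat) by (apply INR_lt; lra).
      pose proof (beta_stop x ltac:(lia)) as NS.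
      specialize (HBm (beta x) x ltac:(lia) ltac:(lia) NS).
      apply le_INR in HBm. lra.
  - intros [|x t]. left; reflexivity. rewrite Hf_pt. unfold phi.
    replace (1 - 1) with 0 by ring. rewrite Rmult_0_l, Rplus_0_r.
    pose proof (height_pt x t). apply Tinf_P; auto. apply Rmin_r. pose proof (Rmin_l (height X (Pt X x t)) (INR (beta x))). lra.
  - intros [|x t] s Tx Hs. reflexivity. apply Hf_alive. eapply Tinf_alive; eauto.
Qed.

Lemma DR_equiv : deformation_retraction X p -> rooted_mp_homotopy_equivalence X p.
Proof.
  intros [H [[HB [H0 [H1 [HRt [HC HP]]]]] [HT HF]]].
  exists (fun x => H x 1), (fun x => x). split; [|split; [|split]].
  - split; [intros; apply HT|]. split; [apply HRt; lra|]. split.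
    + intros x _ eps Heps. destruct (HC x 1 I ltac:(lra) eps Heps) as [d [Hd Hl]]. exists d. split; auto.
      intros y _ Dxy. apply Hl; auto. exact I. lra. rewrite Rminus_eq_0, Rabs_R0. auto.
    + intros S [M0 HM0].
      destruct (classic (exists x0, S (H x0 1))) as [[x0 Hx0]|NE].
      * destruct (HP (height X (H x0 1) + Rabs M0 + 1)) as [N [HN HPN]].
        { pose proof (height_nonneg (H x0 1)). pose proof (Rabs_pos M0). lra. }
        exists (2 * N). intros y z [_ Sy] [_ Sz].
        assert (Bd : forall w, S (H w 1) -> height X w < N).
        { intros w Sw. rewrite <- dist_root_l. apply (HPN w 1). exact I. lra. rewrite dist_root_l.
          pose proof (HM0 _ _ Hx0 Sw). pose proof (h_le_dist (H x0 1) (H w 1)). pose proof (Rle_abs M0). lra. }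
        pose proof (Bd y Sy). pose proof (Bd z Sz). pose proof (dist_le_h y z). lra.
      * exists 0. intros y z [_ Sy]. exfalso. eauto.
  - split; [intros; exact I|]. split; [reflexivity|]. split.
    + intros x _ eps Heps. exists eps. split; auto.
    + intros S [M0 HM0]. exists M0. intros y z [_ Sy] [_ Sz]. auto.
  - exists (fun x s => H x (1 - s)). split; [intros; exact I|].
    split; [intros x _; rewrite Rminus_0_r; auto|]. split; [intros x _; rewrite Rminus_eq_0; apply H0; exact I|].
    split; [intros s Hs; apply HRt; lra|]. split.
    + intros x s _ Hs eps Heps. destruct (HC x (1 - s) I ltac:(lra) eps Heps) as [d [Hd Hl]].
      exists d. split; auto. intros y r _ Hr Dxy Dsr. apply Hl; auto. exact I. lra.
      replace (1 - s - (1 - r)) with (- (s - r)) by ring. rewrite Rabs_Ropp. auto.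
    + intros M HM. destruct (HP M HM) as [N [HN HPN]]. exists N. split; auto.
      intros x s _ Hs Hx. apply (HPN x (1 - s)); auto. exact I. lra.
  - exists (fun x s => x). split; [intros; auto|]. split; [intros x Tx; symmetry; apply HF; auto; lra|].
    split; [reflexivity|]. split; [reflexivity|]. split.
    + intros x s _ Hs eps Heps. exists eps. split; auto.
    + intros M HM. exists M. split; auto.
Qed.

End S.

Theorem proposition7p10 (X : nat -> Type) (p : forall n, X (S n) -> X n) :
  (MittagLeffler X p <-> rooted_mp_homotopy_equivalence X p) /\
  (MittagLeffler X p -> deformation_retraction X p).
Proof.
  split. split.
  - intros HML. apply DR_equiv, ML_DR, HML.
  - apply equiv_ML.
  - apply ML_DR.
Qed.
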